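(* Let $R$ be a t-unital ring, $\widetilde R=\mathbb Z\oplus R$ its unitalization, and $N$ a left null-module over $R$. Then (a) $R\otimes_R N=R\otimes_{\widetilde R}N=0$ and $\mathrm{Tor}^{\widetilde R}_1(R,N)=0$; (b) $\mathrm{Hom}_R(R,N)=\mathrm{Hom}_{\widetilde R}(R,N)=0$ and $\mathrm{Ext}^1_{\widetilde R}(R,N)=0$.
   Context: Rings are associative, not necessarily unital. The unitalization $\widetilde R=\mathbb Z\oplus R$ has multiplication $(n+r)(n'+r')=nn'+(nr'+n'r+rr')$, so that $R$ is a two-sided ideal; nonunital $R$-modules are the same as unital $\widetilde R$-modules, and Tor and Ext are computed over the unital ring $\widetilde R$. $R$ is t-unital if the multiplication map $R\otimes_R R\to R$ is an isomorphism. A left $R$-module $N$ is a null-module if $rn=0$ for all $r\in R$, $n\in N$. *)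

(* Defs.v *)
From HB Require Import structures.
From mathcomp Require Import all_boot all_order all_algebra.
Set Implicit Arguments. Unset Strict Implicit. Unset Printing Implicit Defensive.
Import Order.TTheory GRing.Theory Num.Theory.
Local Open Scope ring_scope.

Definition nu_ring_axioms (R : zmodType) (mul : R -> R -> R) : Prop :=
  [/\ (forall x y z, mul x (mul y z) = mul (mul x y) z),
      (forall x y z, mul (x + y) z = mul x z + mul y z) &
      (forall x y z, mul x (y + z) = mul x y + mul x z)].

Definition lmod_axioms (R : zmodType) (mul : R -> R -> R)
  (N : zmodType) (act : R -> N -> N) : Prop :=
  [/\ (forall r s x, act (mul r s) x = act r (act s x)),
      (forall r s x, act (r + s) x = act r x + act s x) &
      (forall r x y, act r (x + y) = act r x + act r y)].

Definition null_module (R N : zmodType) (act : R -> N -> N) : Prop :=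
  forall r x, act r x = 0.

Definition Rt (R : zmodType) := (int * R)%type.

Definition rt_mul (R : zmodType) (mul : R -> R -> R) (a b : Rt R) : Rt R :=
  (a.1 * b.1, b.2 *~ a.1 + a.2 *~ b.1 + mul a.2 b.2).

Definition rt_lact (R N : zmodType) (act : R -> N -> N) (a : Rt R) (x : N) : N :=
  x *~ a.1 + act a.2 x.

Definition rt_ract (R : zmodType) (mul : R -> R -> R) (r : R) (a : Rt R) : R :=
  r *~ a.1 + mul r a.2.

(* Tensor products A (x)_S B as the free abelian group on A x B (presented by
   formal terms modulo the abelian group laws) modulo biadditivity and
   balancedness.  A is given by a ternary "sum" relation and a right-action
   relation (so that A may itself be a quotient), B is a Z-module with a left
   S-action. *)
Section Tensor.
Variables (A : Type) (B : zmodType) (S : Type).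
Variables (addA : A -> A -> A -> Prop)    (* addA a a' a''  :  a'' = a + a' *)
          (actA : A -> S -> A -> Prop)    (* actA a s a'    :  a' = a . s   *)
          (actB : S -> B -> B).

Inductive tterm : Type :=
  | tzero : tterm
  | tpure : A -> B -> tterm
  | tadd : tterm -> tterm -> tterm
  | topp : tterm -> tterm.

Inductive teq : tterm -> tterm -> Prop :=
  | teq_refl t : teq t t
  | teq_sym t u : teq t u -> teq u t
  | teq_trans t u v : teq t u -> teq u v -> teq t v
  | teq_addc t t' u u' : teq t t' -> teq u u' -> teq (tadd t u) (tadd t' u')
  | teq_oppc t t' : teq t t' -> teq (topp t) (topp t')
  | teq_addA t u v : teq (tadd t (tadd u v)) (tadd (tadd t u) v)
  | teq_addC t u : teq (tadd t u) (tadd u t)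
  | teq_add0 t : teq (tadd tzero t) t
  | teq_addN t : teq (tadd (topp t) t) tzero
  | teq_linl a a' a'' b : addA a a' a'' ->
      teq (tpure a'' b) (tadd (tpure a b) (tpure a' b))
  | teq_linr a b b' : teq (tpure a (b + b')) (tadd (tpure a b) (tpure a b'))
  | teq_bal a s a' b : actA a s a' -> teq (tpure a' b) (tpure a (actB s b)).

Definition tensor_zero : Prop := forall t, teq t tzero.

End Tensor.

Arguments tzero {A B}.

Fixpoint tmap (A A' : Type) (B : zmodType) (f : A -> A') (t : tterm A B)
  : tterm A' B :=
  match t with
  | tzero => tzero
  | tpure a b => tpure (f a) b
  | tadd t u => tadd (tmap f t) (tmap f u)
  | topp t => topp (tmap f t)
  end.

Definition zadd (A : zmodType) (a a' a'' : A) : Prop := a'' = a + a'.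
Definition zact (A : zmodType) (S : Type) (ract : A -> S -> A) (a : A) (s : S) (a' : A)
  : Prop := a' = ract a s.

Definition tensor_R_zero (R N : zmodType) (mul : R -> R -> R) (act : R -> N -> N) :=
  tensor_zero (@zadd R) (zact mul) act.
Definition tensor_Rt_zero (R N : zmodType) (mul : R -> R -> R) (act : R -> N -> N) :=
  tensor_zero (@zadd R) (zact (rt_ract mul)) (rt_lact act).

(* t-unital: the multiplication map R (x)_R R -> R is an isomorphism.         *)
Fixpoint teval (R : zmodType) (mul : R -> R -> R) (t : tterm R R) : R :=
  match t with
  | tzero => 0
  | tpure a b => mul a b
  | tadd t u => teval mul t + teval mul u
  | topp t => - teval mul t
  end.

Definition t_unital (R : zmodType) (mul : R -> R -> R) : Prop :=
  (* well defined (automatic from ring axioms, included for completeness) *)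
  (forall t u, teq (@zadd R) (zact mul) mul t u -> teval mul t = teval mul u) /\
  (forall t u, teval mul t = teval mul u -> teq (@zadd R) (zact mul) mul t u) /\
  (forall r, exists t, teval mul t = r).

Definition hom_R_zero (R N : zmodType) (mul : R -> R -> R) (act : R -> N -> N) :=
  forall f : R -> N, zmod_morphism f -> (forall r s, f (mul r s) = act r (f s)) ->
    forall r, f r = 0.

Definition rt_lact_R (R : zmodType) (mul : R -> R -> R) (a : Rt R) (r : R) : R :=
  r *~ a.1 + mul a.2 r.

Definition hom_Rt_zero (R N : zmodType) (mul : R -> R -> R) (act : R -> N -> N) :=
  forall f : R -> N, zmod_morphism f ->
    (forall (a : Rt R) r, f (rt_lact_R mul a r) = rt_lact act a (f r)) ->
    forall r, f r = 0.

(* Tor_1^Rt(R, N), computed from the free presentation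
      0 -> K -> F -> R -> 0
   of the right Rt-module R, where F is the free right Rt-module on the set R
   (elements: finite formal sums  sum_i e_{r_i} a_i, represented by lists of
   pairs (r_i, a_i) up to equality of coefficients), F -> R is
   e_r a |-> r . a, and K is its kernel.  Then
      Tor_1^Rt(R, N) = ker (K (x)_Rt N -> F (x)_Rt N).                      *)
Section Tor.
Variables (R : zmodType) (mul : R -> R -> R).

Definition Fel := seq (R * Rt R).

Definition Fcoef (f : Fel) (r : R) : Rt R :=
  ((\sum_(p <- f | p.1 == r) p.2.1)%R, \sum_(p <- f | p.1 == r) p.2.2).

Definition Feq (f g : Fel) : Prop := forall r, Fcoef f r = Fcoef g r.

Definition Fadd (f g h : Fel) : Prop := Feq h (f ++ g).

Definition Fscale (f : Fel) (a : Rt R) : Fel :=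
  [seq (p.1, rt_mul mul p.2 a) | p <- f].

Definition Fact (f : Fel) (a : Rt R) (g : Fel) : Prop := Feq g (Fscale f a).

Definition Feps (f : Fel) : R := \sum_(p <- f) rt_ract mul p.1 p.2.

Definition Kel := {f : Fel | Feps f = 0}.

Definition Kadd (k k' k'' : Kel) : Prop := Fadd (sval k) (sval k') (sval k'').
Definition Kact (k : Kel) (a : Rt R) (k' : Kel) : Prop := Fact (sval k) a (sval k').

Definition Tor1_Rt_zero (N : zmodType) (act : R -> N -> N) : Prop :=
  forall t : tterm Kel N,
    teq Fadd Fact (rt_lact act) (tmap (fun k : Kel => sval k) t) tzero ->
    teq Kadd Kact (rt_lact act) t tzero.

End Tor.

(* Ext^1_Rt(R, N) = 0, with Ext^1 in Yoneda's description: every extension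
     0 -> N -> E -> R -> 0  of left Rt-modules splits.
   (Left Rt-modules = unital Rt-modules = left R-modules E with the action
   (n, r) . e = n e + r e.)                                                  *)
Definition Ext1_Rt_zero (R N : zmodType) (mul : R -> R -> R) (act : R -> N -> N)
  : Prop :=
  forall (E : zmodType) (actE : R -> E -> E), lmod_axioms mul actE ->
  forall (i : N -> E) (p : E -> R),
    zmod_morphism i -> (forall a x, i (rt_lact act a x) = rt_lact actE a (i x)) ->
    zmod_morphism p -> (forall a e, p (rt_lact actE a e) = rt_lact_R mul a (p e)) ->
    injective i -> (forall r, exists e, p e = r) ->
    (forall e, p e = 0 <-> exists x, i x = e) ->
    exists s : R -> E,
      [/\ zmod_morphism s, (forall a r, s (rt_lact_R mul a r) = rt_lact actE a (s r))
        & forall r, p (s r) = r].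

(* Main.v *)
Require Import Defs.
From HB Require Import structures.
From mathcomp Require Import all_boot all_order all_algebra zify.
From Stdlib Require Import Setoid Morphisms IndefiniteDescription.
Set Implicit Arguments. Unset Strict Implicit. Unset Printing Implicit Defensive.
Import GRing.Theory.
Local Open Scope ring_scope.


Section TeqTools.
Variables (A : Type) (B : zmodType) (S : Type).
Variables (addA : A -> A -> A -> Prop) (actA : A -> S -> A -> Prop) (actB : S -> B -> B).
Local Notation T := (tterm A B).
Local Notation "x ≈ y" := (teq addA actA actB x y) (at level 70).

Global Instance teq_Equiv : Equivalence (teq addA actA actB).
Proof. split; [exact: teq_refl | exact: teq_sym | exact: teq_trans]. Qed.
Global Instance tadd_Proper : Proper (teq addA actA actB ==> teq addA actA actB ==> teq addA actA actB) (@tadd A B).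
Proof. by move=> ? ? ? ? ? ?; apply: teq_addc. Qed.
Global Instance topp_Proper : Proper (teq addA actA actB ==> teq addA actA actB) (@topp A B).
Proof. by move=> ? ? ?; apply: teq_oppc. Qed.

Lemma t_addA (t u v : T) : tadd t (tadd u v) ≈ tadd (tadd t u) v. Proof. exact: teq_addA. Qed.
Lemma t_addC (t u : T) : tadd t u ≈ tadd u t. Proof. exact: teq_addC. Qed.
Lemma t_add0 (t : T) : tadd tzero t ≈ t. Proof. exact: teq_add0. Qed.
Lemma t_addr0 (t : T) : tadd t tzero ≈ t. Proof. rewrite t_addC t_add0; reflexivity. Qed.
Lemma t_addN (t : T) : tadd (topp t) t ≈ tzero. Proof. exact: teq_addN. Qed.
Lemma t_addrN (t : T) : tadd t (topp t) ≈ tzero. Proof. rewrite t_addC t_addN; reflexivity. Qed.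

Lemma t_oppU (t u : T) : tadd t u ≈ tzero -> u ≈ topp t.
Proof.
move=> h. transitivity (tadd (tadd (topp t) t) u).
  rewrite t_addN t_add0; reflexivity.
rewrite -t_addA h. exact: t_addr0.
Qed.
Lemma t_cancel (t u : T) : tadd t u ≈ tzero -> u ≈ tzero -> t ≈ tzero.
Proof. move=> h hu. transitivity (tadd t tzero). symmetry; exact: t_addr0.
transitivity (tadd t u). apply: teq_addc; [reflexivity| symmetry; exact hu]. exact h. Qed.
Lemma t_double (t : T) : t ≈ tadd t t -> t ≈ tzero.
Proof.
move=> h. transitivity (tadd t (tadd t (topp t))).
  rewrite t_addrN t_addr0; reflexivity.
rewrite t_addA -h. exact: t_addrN.
Qed.
Lemma t_opp0 : topp (tzero : T) ≈ tzero.
Proof. transitivity (tadd (topp tzero) (tzero : T)). symmetry; exact: t_addr0. exact: t_addN. Qed.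
Lemma t_oppK (t : T) : topp (topp t) ≈ t.
Proof. symmetry. apply: t_oppU. exact: t_addN. Qed.
Lemma t_oppD (t u : T) : topp (tadd t u) ≈ tadd (topp t) (topp u).
Proof.
symmetry; apply: t_oppU.
rewrite [tadd (topp t) _]t_addC t_addA -[tadd (tadd t u) _]t_addA t_addrN t_addr0.
exact: t_addrN.
Qed.
Lemma t_addACA (t u v w : T) : tadd (tadd t u) (tadd v w) ≈ tadd (tadd t v) (tadd u w).
Proof.
transitivity (tadd t (tadd u (tadd v w))). symmetry; exact: t_addA.
transitivity (tadd t (tadd v (tadd u w))); last exact: t_addA.
apply: teq_addc; first reflexivity.
rewrite t_addA (t_addC u v) -t_addA; reflexivity.
Qed.

Lemma pure0 (a : A) : tpure a 0 ≈ tzero.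
Proof. apply: t_double. rewrite -{1}[0](addr0 (0:B)). exact: teq_linr. Qed.
Lemma pureN (a : A) (b : B) : tpure a (- b) ≈ topp (tpure a b).
Proof.
apply: t_oppU. rewrite -teq_linr subrr. exact: pure0.
Qed.
Lemma pureD (a : A) (b b' : B) : tpure a (b + b') ≈ tadd (tpure a b) (tpure a b').
Proof. exact: teq_linr. Qed.

Definition tsum (l : seq T) : T := foldr (@tadd A B) tzero l.
Lemma tsum_cat l1 l2 : tsum (l1 ++ l2) ≈ tadd (tsum l1) (tsum l2).
Proof.
elim: l1 => [|x l IH] /=; first by symmetry; exact: t_add0.
rewrite IH t_addA; reflexivity.
Qed.
Lemma tsum_opp l : topp (tsum l) ≈ tsum (map (@topp A B) l).
Proof.
elim: l => [|x l IH] /=; first exact: t_opp0.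
rewrite t_oppD IH; reflexivity.
Qed.
Lemma tsum_filter (P : pred T) l :
  tsum l ≈ tadd (tsum (filter P l)) (tsum (filter (predC P) l)).
Proof.
elim: l => [|x l IH] /=; first by symmetry; exact: t_addr0.
case: (P x) => /=; rewrite IH; first by exact: t_addA.
rewrite t_addA (t_addC x _) -t_addA; reflexivity.
Qed.
Lemma tsum_pure (I : Type) (a : A) (f : I -> B) (l : seq I) :
  tsum [seq tpure a (f i) | i <- l] ≈ tpure a (\sum_(i <- l) f i).
Proof.
elim: l => [|x l IH] /=; first by rewrite big_nil pure0; reflexivity.
rewrite big_cons pureD IH; reflexivity.
Qed.
Lemma tsum_filter_map (I : Type) (F : I -> T) (P : pred I) (l : seq I) :
  tsum (map F l) ≈ tadd (tsum (map F (filter P l))) (tsum (map F (filter (predC P) l))).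
Proof.
elim: l => [|x l IH] /=; first by symmetry; exact: t_addr0.
case: (P x) => /=; rewrite IH; first by exact: t_addA.
rewrite t_addA (t_addC (F x) _) -t_addA; reflexivity.
Qed.
Lemma tsum_map_eq (I : Type) (F G : I -> T) (l : seq I) :
  (forall i, F i ≈ G i) -> tsum (map F l) ≈ tsum (map G l).
Proof.
move=> h; elim: l => [|x l IH] /=; first reflexivity.
rewrite IH h; reflexivity.
Qed.
Lemma tsum_map_eq_in (I : eqType) (F G : I -> T) (l : seq I) :
  (forall i, i \in l -> F i ≈ G i) -> tsum (map F l) ≈ tsum (map G l).
Proof.
elim: l => [|x l IH] h /=; first reflexivity.
rewrite IH ?h ?mem_head //; first reflexivity.
by move=> i il; apply: h; rewrite in_cons il orbT.
Qed.
End TeqTools.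


Section Addf.
Variables (U V : zmodType) (f : U -> V) (hf : forall x y, f (x + y) = f x + f y).
Lemma addf0 : f 0 = 0.
Proof. apply: (addrI (f 0)); by rewrite -hf !addr0. Qed.
Lemma addfN x : f (- x) = - f x.
Proof. apply/eqP; rewrite -subr_eq0 opprK -hf addNr; exact/eqP/addf0. Qed.
Lemma addfB x y : f (x - y) = f x - f y.
Proof. by rewrite hf addfN. Qed.
Lemma addf_sum (I : Type) (r : seq I) (P : pred I) (F : I -> U) :
  f (\sum_(i <- r | P i) F i) = \sum_(i <- r | P i) f (F i).
Proof.
elim: r => [|x r IH]; first by rewrite !big_nil addf0.
rewrite !big_cons; case: (P x) => //. by rewrite hf IH.
Qed.
Lemma addf_mulz x n : f (x *~ n) = f x *~ n.
Proof.
have hn : forall m : nat, f (x *+ m) = f x *+ m.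
  elim=> [|m IH]; first by rewrite !mulr0n addf0.
  by rewrite !mulrS hf IH.
case: n => m; first exact: hn.
rewrite NegzE !mulrNz addfN; congr (- _); exact: hn.
Qed.
End Addf.

Lemma zmorph_add (U V : zmodType) (f : U -> V) : zmod_morphism f -> forall x y, f (x + y) = f x + f y.
Proof.
move=> h x y.
have h0 : f 0 = 0 by rewrite -(subrr (0:U)) h subrr.
have hN : forall z, f (- z) = - f z by move=> z; rewrite -sub0r h h0 sub0r.
by rewrite -{1}[y]opprK h hN opprK.
Qed.

Section Main.
Variables (R : zmodType) (mul : R -> R -> R) (N : zmodType) (act : R -> N -> N).
Hypotheses (Hring : nu_ring_axioms mul) (Hmod : lmod_axioms mul act) (Hnull : null_module act).

Lemma nmA x y z : mul x (mul y z) = mul (mul x y) z. Proof. by case: Hring. Qed.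
Lemma nmDl x y z : mul (x + y) z = mul x z + mul y z. Proof. by case: Hring. Qed.
Lemma nmDr x y z : mul x (y + z) = mul x y + mul x z. Proof. by case: Hring. Qed.
Lemma nm0r x : mul 0 x = 0. Proof. exact: (addf0 (f := mul^~ x)) (fun a b => nmDl a b x). Qed.
Lemma nmr0 x : mul x 0 = 0. Proof. exact: (addf0 (f := mul x)) (nmDr x). Qed.
Lemma nmNr x y : mul (- x) y = - mul x y. Proof. exact: (@addfN _ _ (mul^~ y) (fun a b => nmDl a b y) x). Qed.
Lemma nmrN x y : mul x (- y) = - mul x y. Proof. exact: (@addfN _ _ (mul x) (nmDr x) y). Qed.
Lemma nmzl x y n : mul (x *~ n) y = mul x y *~ n. Proof. exact: (@addf_mulz _ _ (mul^~ y) (fun a b => nmDl a b y) x n). Qed.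
Lemma nmzr x y n : mul x (y *~ n) = mul x y *~ n. Proof. exact: (@addf_mulz _ _ (mul x) (nmDr x) y n). Qed.

Section TensGen.
Variables (S : Type) (actA : R -> S -> R -> Prop) (actB : S -> N -> N).
Local Notation "x ≈ y" := (teq (@zadd R) actA actB x y) (at level 70).
Hypothesis H : forall x y b, tpure (mul x y) b ≈ tzero.

Lemma pureL0 (b : N) : tpure (0 : R) b ≈ tzero.
Proof. apply: t_double. apply: teq_linl. by rewrite /zadd addr0. Qed.

Lemma teval_pure0 (t : tterm R R) b : tpure (teval mul t) b ≈ tzero.
Proof.
elim: t => [|x y|t IHt u IHu|t IHt] /=.
- exact: pureL0.
- exact: H.
- rewrite (teq_linl _ _ (a := teval mul t) (a' := teval mul u)) //.
  rewrite IHt IHu t_add0; reflexivity.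
- apply: (t_cancel (u := tpure (teval mul t) b)) => //.
  rewrite -(teq_linl _ _ (a'' := 0)); first exact: pureL0.
  by rewrite /zadd addNr.
Qed.

Lemma tensor_gen (surj : forall r, exists t, teval mul t = r) : tensor_zero (@zadd R) actA actB.
Proof.
elim=> [|a b|t IHt u IHu|t IHt].
- reflexivity.
- have [t <-] := surj a. exact: teval_pure0.
- rewrite IHt IHu t_add0; reflexivity.
- rewrite IHt; exact: t_opp0.
Qed.
End TensGen.

Lemma tensorR (surj : forall r, exists t, teval mul t = r) : tensor_R_zero mul act.
Proof.
apply: tensor_gen surj => x y b.
rewrite (teq_bal _ _ (a := x) (s := y)) //. rewrite Hnull; exact: pure0.
Qed.

Lemma tensorRt (surj : forall r, exists t, teval mul t = r) : tensor_Rt_zero mul act.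
Proof.
apply: tensor_gen surj => x y b.
rewrite (teq_bal _ _ (a := x) (s := (0, y))); last by rewrite /zact /rt_ract /= mulr0z add0r.
rewrite /rt_lact /= Hnull mulr0z addr0; exact: pure0.
Qed.

Lemma hom_vanish (f : R -> N) : zmod_morphism f -> (forall x y, f (mul x y) = 0) ->
  (forall r, exists t, teval mul t = r) -> forall r, f r = 0.
Proof.
move=> hf hm surj r; have [t <-] := surj r.
have fa := zmorph_add hf.
elim: t => [|x y|t IHt u IHu|t IHt] /=.
- exact: addf0 fa.
- exact: hm.
- by rewrite fa IHt IHu addr0.
- by rewrite (addfN fa) IHt oppr0.
Qed.

Lemma homR (surj : forall r, exists t, teval mul t = r) : hom_R_zero mul act.
Proof. move=> f hf hl; apply: hom_vanish => // x y; by rewrite hl Hnull. Qed.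

Lemma homRt (surj : forall r, exists t, teval mul t = r) : hom_Rt_zero mul act.
Proof.
move=> f hf hl; apply: hom_vanish => // x y.
have := hl (0, x) y; rewrite /rt_lact_R /rt_lact /= !mulr0z !add0r => ->.
by rewrite Hnull.
Qed.
End Main.


Fixpoint tfold (R : zmodType) (V : zmodType) (h : R -> R -> V) (t : tterm R R) : V :=
  match t with
  | tzero => 0
  | tpure a b => h a b
  | tadd t u => tfold h t + tfold h u
  | topp t => - tfold h t
  end.

Fixpoint lmulT (R : zmodType) (mul : R -> R -> R) (z : R) (t : tterm R R) : tterm R R :=
  match t with
  | tzero => tzero
  | tpure a b => tpure (mul z a) b
  | tadd t u => tadd (lmulT mul z t) (lmulT mul z u)
  | topp t => topp (lmulT mul z t)
  end.

Section Ext.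
Variables (R : zmodType) (mul : R -> R -> R) (N : zmodType) (act : R -> N -> N).
Hypotheses (Hring : nu_ring_axioms mul) (Hmod : lmod_axioms mul act) (Hnull : null_module act).
Hypothesis Htu : t_unital mul.

Lemma teval_fold t : teval mul t = tfold mul t.
Proof. by elim: t => //= [t -> u ->|t ->]. Qed.

Lemma teval_lmul z t : teval mul (lmulT mul z t) = mul z (teval mul t).
Proof.
elim: t => /= [|a b|t IHt u IHu|t IHt].
- by rewrite (nmr0 Hring).
- by rewrite (nmA Hring).
- by rewrite IHt IHu (nmDr Hring).
- by rewrite IHt (nmrN Hring).
Qed.

Lemma ext1 : Ext1_Rt_zero mul act.
Proof.
case: Htu => Hwd [Hinj Hsurj].
move=> E actE HE i p hi hiL hp hpL inj_i surj_p hex.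
have [EA ED1 ED2] := HE.
have ia := zmorph_add hi. have pa := zmorph_add hp.
have actEi : forall x n, actE x (i n) = 0.
  move=> x n; have := hiL (0, x) n.
  rewrite /rt_lact /= Hnull !mulr0z addr0 add0r (addf0 ia) => <- //.
have E1 : forall x e e', p e = p e' -> actE x e = actE x e'.
  move=> x e e' he.
  have [n hn] : exists n, i n = e - e' by apply/hex; rewrite (addfB pa) he subrr.
  by rewrite -[e](subrK e') -hn addrC ED2 actEi addr0.
have E2 : forall z e, p (actE z e) = mul z (p e).
  move=> z e; have := hpL (0, z) e; by rewrite /rt_lact /rt_lact_R /= !mulr0z !add0r.
pose lift := fun y => proj1_sig (constructive_indefinite_description _ (surj_p y)).
have hlift : forall y, p (lift y) = y.
  move=> y; exact: (proj2_sig (constructive_indefinite_description _ (surj_p y))).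
pose g := fun x y => actE x (lift y).
have E3 : forall t u, teq (@zadd R) (zact mul) mul t u -> tfold g t = tfold g u.
  move=> t u; elim=> /=; try (by intros; congruence).
  - by move=> *; rewrite addrA.
  - by move=> *; rewrite addrC.
  - by move=> *; rewrite add0r.
  - by move=> *; rewrite addNr.
  - by move=> a a' a'' b ->; rewrite /g ED1.
  - move=> a b b'; rewrite /g -ED2; apply: E1.
    by rewrite (pa (lift b)) !hlift.
  - move=> a s a' b ->; rewrite /g EA; apply: E1.
    by rewrite E2 !hlift.
pose tr := fun r => proj1_sig (constructive_indefinite_description _ (Hsurj r)).
have htr : forall r, teval mul (tr r) = r.
  move=> r; exact: (proj2_sig (constructive_indefinite_description _ (Hsurj r))).
pose s := fun r => tfold g (tr r).
have E5 : forall t, s (teval mul t) = tfold g t.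
  move=> t; apply: E3; apply: Hinj; by rewrite htr.
have sa : forall x y, s (x + y) = s x + s y.
  move=> x y; rewrite -{1}(htr x) -{1}(htr y).
  by rewrite -[teval mul (tr x) + _]/(teval mul (tadd (tr x) (tr y))) E5.
have pg : forall t, p (tfold g t) = teval mul t.
  elim=> /= [|a b|t IHt u IHu|t IHt].
  - exact: addf0 pa.
  - by rewrite /g E2 hlift.
  - by rewrite pa IHt IHu.
  - by rewrite (addfN pa) IHt.
have gl : forall z t, tfold g (lmulT mul z t) = actE z (tfold g t).
  move=> z; elim=> /= [|a b|t IHt u IHu|t IHt].
  - by rewrite (addf0 (ED2 z)).
  - by rewrite /g EA.
  - by rewrite IHt IHu ED2.
  - by rewrite IHt (addfN (ED2 z)).
exists s; split.
- by move=> x y; rewrite (addfB sa).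
- move=> [n z] r; rewrite /rt_lact_R /rt_lact /= sa (addf_mulz sa); congr (_ + _).
  by rewrite -{1}(htr r) -teval_lmul E5 gl.
- by move=> r; rewrite /s pg htr.
Qed.
End Ext.


Section TorProof.
Variables (R : zmodType) (mul : R -> R -> R) (N : zmodType) (act : R -> N -> N).
Hypotheses (Hring : nu_ring_axioms mul) (Hmod : lmod_axioms mul act) (Hnull : null_module act).
Hypothesis Htu : t_unital mul.

Definition c1 (f : Fel R) r : int := \sum_(p <- f | p.1 == r) p.2.1.
Definition c2 (f : Fel R) r : R := \sum_(p <- f | p.1 == r) p.2.2.

Lemma FeqP f g : (forall r, c1 f r = c1 g r) -> (forall r, c2 f r = c2 g r) -> Feq f g.
Proof. move=> h1 h2 r; rewrite /Fcoef; congr pair; [exact: h1 | exact: h2]. Qed.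
Lemma Feq1 f g : Feq f g -> forall r, c1 f r = c1 g r.
Proof. by move=> h r; have := h r; rewrite /Fcoef => -[]. Qed.
Lemma Feq2 f g : Feq f g -> forall r, c2 f r = c2 g r.
Proof. by move=> h r; have := h r; rewrite /Fcoef => -[]. Qed.

Definition negF (l : Fel R) : Fel R := [seq (p.1, (- p.2.1, - p.2.2)) | p <- l].

Lemma c1_cat f g r : c1 (f ++ g) r = c1 f r + c1 g r. Proof. by rewrite /c1 big_cat. Qed.
Lemma c2_cat f g r : c2 (f ++ g) r = c2 f r + c2 g r. Proof. by rewrite /c2 big_cat. Qed.
Lemma c1_nil r : c1 [::] r = 0. Proof. by rewrite /c1 big_nil. Qed.
Lemma c2_nil r : c2 [::] r = 0. Proof. by rewrite /c2 big_nil. Qed.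
Lemma c1_neg f r : c1 (negF f) r = - c1 f r. Proof. by rewrite /c1 big_map sumrN. Qed.
Lemma c2_neg f r : c2 (negF f) r = - c2 f r. Proof. by rewrite /c2 big_map sumrN. Qed.
Lemma c1_cons p f r : c1 (p :: f) r = (if p.1 == r then p.2.1 else 0) + c1 f r.
Proof. by rewrite /c1 big_cons; case: ifP; rewrite ?add0r. Qed.
Lemma c2_cons p f r : c2 (p :: f) r = (if p.1 == r then p.2.2 else 0) + c2 f r.
Proof. by rewrite /c2 big_cons; case: ifP; rewrite ?add0r. Qed.
Lemma c1_scale f a r : c1 (Fscale mul f a) r = c1 f r * a.1.
Proof. by rewrite /c1 big_map mulr_suml. Qed.

Lemma Feps_cat f g : Feps mul (f ++ g) = Feps mul f + Feps mul g.
Proof. by rewrite /Feps big_cat. Qed.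
Lemma Feps_neg f : Feps mul (negF f) = - Feps mul f.
Proof.
rewrite /Feps big_map -sumrN; apply: eq_bigr => p _.
by rewrite /rt_ract /= mulrNz (nmrN Hring) opprD.
Qed.
Lemma Feps_scalen f n : Feps mul (Fscale mul f (n, 0)) = Feps mul f *~ n.
Proof.
rewrite /Feps big_map mulrz_suml; apply: eq_bigr => p _.
rewrite /rt_ract /rt_mul /= mul0rz add0r (nmr0 Hring) addr0 mulrzA mulrzDl.
by rewrite (nmzr Hring).
Qed.

Fixpoint phiT (t : tterm R R) : Fel R :=
  match t with
  | tzero => [::]
  | tpure u v => [:: (u, (0, v))]
  | tadd t u => phiT t ++ phiT u
  | topp t => negF (phiT t)
  end.

Lemma Feps_phi t : Feps mul (phiT t) = teval mul t.
Proof.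
elim: t => /= [|u v|t IHt u IHu|t IHt].
- by rewrite /Feps big_nil.
- by rewrite /Feps big_seq1 /rt_ract /= mulr0z add0r.
- by rewrite Feps_cat IHt IHu.
- by rewrite Feps_neg IHt.
Qed.
Lemma c1_phi t r : c1 (phiT t) r = 0.
Proof.
elim: t => /= [|u v|t IHt u IHu|t IHt].
- exact: c1_nil.
- by rewrite c1_cons c1_nil addr0; case: ifP.
- by rewrite c1_cat IHt IHu addr0.
- by rewrite c1_neg IHt oppr0.
Qed.

Local Notation K := (Kel mul).
Local Notation "x ≈ y" := (teq (@Kadd R mul) (@Kact R mul) (rt_lact act) x y) (at level 70).

Definition mkK (l : Fel R) (h : Feps mul l = 0) : K := exist _ l h.

Lemma Feps_nil : Feps mul [::] = 0. Proof. by rewrite /Feps big_nil. Qed.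
Definition k0 : K := mkK Feps_nil.

Lemma k0_zero x : tpure k0 x ≈ tzero.
Proof. apply: t_double. apply: teq_linl. by move=> r. Qed.

Lemma Kzero (k : K) x : Feq (sval k) [::] -> tpure k x ≈ tzero.
Proof.
move=> h. rewrite (teq_linl _ _ (a := k0) (a' := k0)).
  rewrite k0_zero t_add0; reflexivity.
exact: h.
Qed.

Lemma KFeq (k k' : K) x : Feq (sval k) (sval k') -> tpure k x ≈ tpure k' x.
Proof.
move=> h. rewrite (teq_linl _ _ (a := k') (a' := k0)).
  rewrite k0_zero t_addr0; reflexivity.
by rewrite /Kadd /Fadd /= cats0.
Qed.

Lemma Kneg (k k' : K) x : Feq (sval k) (negF (sval k')) -> tpure k x ≈ topp (tpure k' x).
Proof.
move=> h. apply: t_oppU. rewrite -(teq_linl _ _ (a'' := k0)); first exact: k0_zero.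
apply: FeqP => r; rewrite /= ?c1_nil ?c2_nil ?c1_cat ?c2_cat.
  by rewrite (Feq1 h) c1_neg subrr.
by rewrite (Feq2 h) c2_neg subrr.
Qed.


Lemma FepsD t u : teval mul t = teval mul u -> Feps mul (phiT t ++ negF (phiT u)) = 0.
Proof. by move=> e; rewrite Feps_cat Feps_neg !Feps_phi e subrr. Qed.

Ltac c2tac := do 4 rewrite ?c2_cat ?c2_neg ?c2_nil /=.
Ltac c1tac := do 4 rewrite ?c1_cat ?c1_neg ?c1_phi ?c1_nil ?oppr0 ?addr0 ?add0r /=.

Lemma claimA t u : teq (@zadd R) (zact mul) mul t u ->
  forall (k : K) x, Feq (sval k) (phiT t ++ negF (phiT u)) -> tpure k x ≈ tzero.
Proof.
case: Htu => Hwd _.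
elim => {t u}.
- move=> t k x h; apply: Kzero; apply: FeqP => r; rewrite ?(Feq1 h) ?(Feq2 h).
    by c1tac.
  by c2tac; rewrite subrr.
- move=> t u H IH k x h.
  transitivity (topp (tpure (mkK (FepsD (Hwd _ _ H))) x)).
    apply: Kneg; apply: FeqP => r /=; rewrite ?(Feq1 h) ?(Feq2 h).
      by c1tac.
    by c2tac; rewrite opprD opprK addrC.
  rewrite (IH _ x); [exact: t_opp0 | by move=> r].
- move=> t u v H1 IH1 H2 IH2 k x h.
  transitivity (tadd (tpure (mkK (FepsD (Hwd _ _ H1))) x) (tpure (mkK (FepsD (Hwd _ _ H2))) x)).
    apply: teq_linl; apply: FeqP => r /=; rewrite ?(Feq1 h) ?(Feq2 h).
      by c1tac.
    by c2tac; rewrite addrA subrK.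
  rewrite (IH1 _ x) ?(IH2 _ x) ?t_add0; try reflexivity; by move=> r.
- move=> t t' u u' H1 IH1 H2 IH2 k x h.
  transitivity (tadd (tpure (mkK (FepsD (Hwd _ _ H1))) x) (tpure (mkK (FepsD (Hwd _ _ H2))) x)).
    apply: teq_linl; apply: FeqP => r /=; rewrite ?(Feq1 h) ?(Feq2 h).
      by c1tac.
    by c2tac; rewrite opprD addrACA.
  rewrite (IH1 _ x) ?(IH2 _ x) ?t_add0; try reflexivity; by move=> r.
- move=> t t' H IH k x h.
  transitivity (topp (tpure (mkK (FepsD (Hwd _ _ H))) x)).
    apply: Kneg; apply: FeqP => r /=; rewrite ?(Feq1 h) ?(Feq2 h).
      by c1tac.
    by c2tac; rewrite opprK opprD opprK addrC.
  rewrite (IH _ x); [exact: t_opp0 | by move=> r].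
- move=> t u v k x h; apply: Kzero; apply: FeqP => r; rewrite ?(Feq1 h) ?(Feq2 h).
    by c1tac.
  by c2tac; rewrite addrA subrr.
- move=> t u k x h; apply: Kzero; apply: FeqP => r; rewrite ?(Feq1 h) ?(Feq2 h).
    by c1tac.
  by c2tac; rewrite (addrC (c2 (phiT t) r)) subrr.
- move=> t k x h; apply: Kzero; apply: FeqP => r; rewrite ?(Feq1 h) ?(Feq2 h).
    by c1tac.
  by c2tac; rewrite add0r subrr.
- move=> t k x h; apply: Kzero; apply: FeqP => r; rewrite ?(Feq1 h) ?(Feq2 h).
    by c1tac.
  by c2tac; rewrite addNr oppr0 addr0.
- move=> a a' a'' b ha k x h.
  pose l1 : Fel R := [:: (a'', (1, 0)); (a, (-1, 0)); (a', (-1, 0))].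
  have hl1 : Feps mul l1 = 0.
    rewrite /Feps !big_cons big_nil /rt_ract /= !(nmr0 Hring) mulr1z !mulrN1z !addr0 ha.
    by rewrite addrACA !subrr addr0.
  transitivity (tpure (mkK hl1) (rt_lact act (0, b) x)).
    apply: teq_bal; rewrite /Kact /Fact /=.
    rewrite /rt_mul /= !mulr0 mulr1z !mulrN1z !mul0rz !(nm0r Hring) !addr0.
    by move: h; rewrite /= oppr0.
  rewrite /rt_lact /= Hnull mulr0z addr0; exact: pure0.
- move=> a b b' k x h; apply: Kzero; apply: FeqP => r; rewrite ?(Feq1 h) ?(Feq2 h).
    by c1tac.
  c2tac; rewrite !c2_cons c2_nil /=.
  by case: ifP => _; rewrite ?addr0 ?oppr0 ?subrr ?add0r.
- move=> a s a' b ha k x h.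
  pose l1 : Fel R := [:: (a', (1, 0)); (a, (0, - s))].
  have hl1 : Feps mul l1 = 0.
    rewrite /Feps !big_cons big_nil /rt_ract /= !(nmr0 Hring) mulr1z mulr0z !addr0 add0r ha.
    by rewrite (nmrN Hring) subrr.
  transitivity (tpure (mkK hl1) (rt_lact act (0, b) x)).
    apply: teq_bal; rewrite /Kact /Fact /=.
    rewrite /rt_mul /= ?mulr0 ?mulr1z ?mulr0z ?mul0rz ?(nm0r Hring) ?(nmNr Hring) ?addr0 ?add0r.
    by move: h; rewrite /= oppr0.
  rewrite /rt_lact /= Hnull mulr0z addr0; exact: pure0.
Qed.

Lemma group0 (X V : zmodType) (h : R -> X -> V)
  (hadd : forall r x y, h r (x + y) = h r x + h r y) (l : seq (R * X)) :
  (forall r, \sum_(p <- l | p.1 == r) p.2 = 0) -> \sum_(p <- l) h p.1 p.2 = 0.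
Proof.
move: {2}(size l) (leqnn (size l)) => n; elim: n l => [|n IH] [|[a x] l] //=;
  try by rewrite big_nil.
move=> hs hz.
rewrite (bigID (fun p : R * X => p.1 == a)) /=.
have -> : \sum_(p <- (a, x) :: l | p.1 == a) h p.1 p.2 = \sum_(p <- (a, x) :: l | p.1 == a) h a p.2.
  by apply: eq_bigr => p /eqP ->.
rewrite -(addf_sum (hadd a)) hz (addf0 (hadd a)) add0r.
rewrite -big_filter; apply: IH.
  rewrite /= eqxx /= size_filter; exact: leq_trans (count_size _ _) hs.
move=> r; rewrite big_filter_cond.
case: (eqVneq r a) => [->|nra].
  by rewrite big_pred0 // => p; rewrite andNb.
rewrite -[RHS](hz r); apply: eq_bigl => p.
by case: (eqVneq p.1 r) => [->|]; rewrite ?andbT ?andbF ?nra.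
Qed.

Definition trT r : tterm R R :=
  proj1_sig (constructive_indefinite_description _ (proj2 (proj2 Htu) r)).
Lemma htr r : teval mul (trT r) = r.
Proof. exact: (proj2_sig (constructive_indefinite_description _ (proj2 (proj2 Htu) r))). Qed.

Definition kapL r : Fel R := (r, (1, 0)) :: negF (phiT (trT r)).
Lemma hkap r : Feps mul (kapL r) = 0.
Proof.
rewrite /kapL /Feps big_cons -/(Feps mul _) Feps_neg Feps_phi htr /rt_ract /=.
by rewrite mulr1z (nmr0 Hring) addr0 subrr.
Qed.
Definition kap r : K := mkK (hkap r).
Lemma c1_kap s r : c1 (kapL s) r = if s == r then 1 else 0.
Proof. by rewrite /kapL c1_cons c1_neg c1_phi oppr0 addr0. Qed.

Definition scL (p : R * Rt R) : Fel R := Fscale mul (kapL p.1) (p.2.1, 0).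
Lemma hsc p : Feps mul (scL p) = 0.
Proof. by rewrite /scL Feps_scalen hkap mul0rz. Qed.
Definition sc p : K := mkK (hsc p).

Definition ML (L : Fel R) : Fel R := flatten [seq scL p | p <- L].
Lemma hML L : Feps mul (ML L) = 0.
Proof. elim: L => [|p L IH]; first exact: Feps_nil. by change (Feps mul (scL p ++ ML L) = 0); rewrite Feps_cat hsc IH addr0. Qed.
Definition MK L : K := mkK (hML L).

Lemma c1_ML L r : c1 (ML L) r = c1 L r.
Proof.
elim: L => [|p L IH]; first by rewrite /ML /= !c1_nil.
change (c1 (scL p ++ ML L) r = c1 (p :: L) r).
rewrite c1_cat IH c1_cons /scL c1_scale c1_kap /=.
by case: ifP; rewrite ?mul1r ?mul0r.
Qed.

Lemma step_i p x : tpure (kap p.1) (x *~ p.2.1) ≈ tpure (sc p) x.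
Proof.
symmetry. transitivity (tpure (kap p.1) (rt_lact act (p.2.1, 0) x)).
  by apply: teq_bal => r.
by rewrite /rt_lact /= Hnull addr0; reflexivity.
Qed.

Lemma step_ii L x : tsum [seq tpure (sc p) x | p <- L] ≈ tpure (MK L) x.
Proof.
elim: L => [|p L IH] /=.
  symmetry; apply: Kzero; by move=> r.
rewrite IH. symmetry. apply: teq_linl. by move=> r.
Qed.

Fixpoint tD (d : Fel R) : tterm R R :=
  if d is p :: d' then tadd (tpure p.1 p.2.2) (tD d') else tzero.
Lemma phi_tD d : phiT (tD d) = [seq (p.1, (0, p.2.2)) | p <- d].
Proof. by elim: d => //= p d ->. Qed.
Lemma teval_tD d : teval mul (tD d) = \sum_(p <- d) mul p.1 p.2.2.
Proof. elim: d => [|p d IH] /=; by rewrite ?big_nil ?big_cons ?IH. Qed.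

Lemma step_iv (D : K) x : (forall r, c1 (sval D) r = 0) -> tpure D x ≈ tzero.
Proof.
move=> h1.
case: Htu => _ [Hinj _].
apply: (@claimA (tD (sval D)) tzero).
  apply: Hinj; rewrite teval_tD /=.
  have := svalP D; rewrite /Feps big_split /= => e.
  have g := @group0 int R (fun r n => r *~ n) (fun r m n => mulrzDr r m n)
     [seq (p.1, p.2.1) | p <- sval D].
  rewrite big_map /= in g.
  rewrite g ?add0r in e; first exact: e.
  by move=> r; rewrite big_map; exact: h1.
apply: FeqP => r; rewrite /= cats0 phi_tD.
  by rewrite h1 /c1 big_map big1.
by rewrite /c2 big_map.
Qed.

Lemma claimB (k : K) x :
  tpure k x ≈ tsum [seq tpure (kap p.1) (x *~ p.2.1) | p <- sval k].
Proof.
have hD : Feps mul (sval k ++ negF (ML (sval k))) = 0.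
  by rewrite Feps_cat Feps_neg hML (svalP k) subrr.
transitivity (tadd (tpure (MK (sval k)) x) (tpure (mkK hD) x)).
  apply: teq_linl; apply: FeqP => r /=; rewrite ?c1_cat ?c2_cat ?c1_neg ?c2_neg.
    by rewrite addrCA subrr addr0.
  by rewrite addrCA subrr addr0.
transitivity (tadd (tpure (MK (sval k)) x) tzero).
  apply: teq_addc; first reflexivity.
  by apply: step_iv => r /=; rewrite c1_cat c1_neg c1_ML subrr.
rewrite t_addr0 -step_ii.
apply: tsum_map_eq => p; symmetry; exact: step_i.
Qed.

Fixpoint evF (t : tterm (Fel R) N) (r : R) : N :=
  match t with
  | tzero => 0
  | tpure f x => x *~ c1 f r
  | tadd t u => evF t r + evF u r
  | topp t => - evF t r
  end.

Lemma evF_teq t u : teq (@Fadd R) (Fact mul) (rt_lact act) t u -> forall r, evF t r = evF u r.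
Proof.
elim=> /=; try (by intros; congruence).
- by move=> *; rewrite addrA.
- by move=> *; rewrite addrC.
- by move=> *; rewrite add0r.
- by move=> *; rewrite addNr.
- by move=> f g h b H r; rewrite (Feq1 H) c1_cat mulrzDr.
- by move=> f b b' r; rewrite mulrzDl.
- move=> f a g b H r; rewrite (Feq1 H) c1_scale /rt_lact Hnull addr0.
  by rewrite mulrC mulrzA.
Qed.

Lemma group0T (L : seq (R * N)) :
  (forall r, \sum_(p <- L | p.1 == r) p.2 = 0) ->
  tsum [seq tpure (kap p.1) p.2 | p <- L] ≈ tzero.
Proof.
move: {2}(size L) (leqnn (size L)) => n; elim: n L => [|n IH] L.
  by case: L => //= *; reflexivity.
case: L => [|[a x] l] hs hz; first reflexivity.
rewrite (tsum_filter_map _ _ _ (fun p : R * N => tpure (kap p.1) p.2) (fun p : R * N => p.1 == a)).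
rewrite (@tsum_map_eq_in _ _ _ _ _ _ _ (fun p : R * N => tpure (kap p.1) p.2) (fun p : R * N => tpure (kap a) p.2)
   [seq p <- (a, x) :: l | p.1 == a]); last first.
  by move=> p; rewrite mem_filter => /andP [/eqP -> _]; reflexivity.
rewrite tsum_pure big_filter hz pure0 t_add0.
apply: IH.
  rewrite /= eqxx /= size_filter; apply: leq_trans (count_size _ _) _; exact: hs.
move=> r; rewrite big_filter_cond.
case: (eqVneq r a) => [->|nra].
  by rewrite big_pred0 // => p; rewrite /= andNb.
rewrite -[RHS](hz r); apply: eq_bigl => p.
rewrite /=; case E: (p.1 == r); rewrite ?andbF // andbT; by move/eqP: E => ->.
Qed.

Lemma normal (t : tterm K N) : exists L : seq (R * N),
  t ≈ tsum [seq tpure (kap p.1) p.2 | p <- L] /\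
  forall r, evF (tmap (fun k : K => sval k) t) r = \sum_(p <- L | p.1 == r) p.2.
Proof.
elim: t => [|k x|t [L1 [h1 e1]] u [L2 [h2 e2]]|t [L [h e]]].
- exists [::]; split; first reflexivity. by move=> r; rewrite big_nil.
- exists [seq (p.1, x *~ p.2.1) | p <- sval k]; split.
    by rewrite -map_comp; exact: claimB.
  by move=> r /=; rewrite big_map /c1 mulrz_sumr.
- exists (L1 ++ L2); split.
    rewrite map_cat tsum_cat h1 h2; reflexivity.
  by move=> r /=; rewrite e1 e2 big_cat.
- exists [seq (p.1, - p.2) | p <- L]; split.
    rewrite h tsum_opp -!map_comp. apply: tsum_map_eq => p /=.
    symmetry; exact: pureN.
  by move=> r /=; rewrite e big_map sumrN.
Qed.

Lemma tor1 : Tor1_Rt_zero mul act.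
Proof.
move=> t H.
have [L [h e]] := normal t.
rewrite h; apply: group0T => r.
by rewrite -e (evF_teq H).
Qed.

End TorProof.

Theorem lemma5p5 (R : zmodType) (mul : R -> R -> R) (N : zmodType) (act : R -> N -> N) :
  nu_ring_axioms mul -> t_unital mul ->
  lmod_axioms mul act -> null_module act ->
  (tensor_R_zero mul act /\ tensor_Rt_zero mul act /\ Tor1_Rt_zero mul act) /\
  (hom_R_zero mul act /\ hom_Rt_zero mul act /\ Ext1_Rt_zero mul act).
Proof.
move=> Hring Htu Hmod Hnull.
have surj := proj2 (proj2 Htu).
split; split; [|split| |split].
- exact: tensorR.
- exact: tensorRt.
- exact: tor1.
- exact: homR.
- exact: homRt.
- exact: ext1.
Qed.
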